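(* Fix a prime power $q$ and an integer $r\ge 0$. Then the limit $p_r(q)=\lim_{n\to\infty} p_r(q,n)$, with $n$ ranging over integers of the same parity as $r$, exists and satisfies $0<p_r(q)<1$. Furthermore, for even $r\ge 2$, $$\frac{p_r(q)}{p_0(q)}=\frac{q^{r/2}}{\prod_{j=1}^r(q^j-1)},\qquad p_0(q)=\frac{1}{1+S},\quad S=\sum_{k=1}^\infty \frac{q^{k}}{\prod_{j=1}^{2k}(q^j-1)},$$ and for odd $r\ge 3$, $$\frac{p_r(q)}{p_1(q)}=\frac{(q-1)q^{(r-1)/2}}{\prod_{j=1}^r(q^j-1)},\qquad p_1(q)=\frac{1}{1+S'},\quad S'=(q-1)\sum_{k=1}^\infty \frac{q^{k}}{\prod_{j=1}^{2k+1}(q^j-1)}.$$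
   Context: Let ${\mathbb F}_q$ be the finite field of order $q$ and $V={\mathbb F}_q^n$. A differential on $V$ is a linear map $D\colon V\to V$ with $D^2=0$; its homology is $\ker D/\operatorname{im} D$, whose dimension $r$ necessarily has the same parity as $n$. Let $c(q,n)$ be the number of differentials on ${\mathbb F}_q^n$, and $c_r(q,n)$ the number of differentials whose homology has dimension $r$. Define $p_r(q,n)=c_r(q,n)/c(q,n)$ (the probability with respect to the uniform distribution on differentials). *)

(* Defs.v *)
From HB Require Import structures.
From mathcomp Require Import all_boot all_order all_algebra all_field.
Set Implicit Arguments. Unset Strict Implicit. Unset Printing Implicit Defensive.
Import GRing.Theory.

(* A differential on F^n is an n x n matrix D (acting on row vectors
   v |-> v *m D) with D^2 = 0. *)
Definition is_differential (F : finFieldType) (n : nat) (D : 'M[F]_n) : bool :=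
  (D *m D == 0)%R.

(* dimension of homology ker D / im D = dim ker D - dim im D (im D <= ker D) *)
Definition homology_dim (F : finFieldType) (n : nat) (D : 'M[F]_n) : nat :=
  (\rank (kermx D) - \rank D)%N.

Definition c_count (F : finFieldType) (n : nat) : nat :=
  #|[set D : 'M[F]_n | is_differential D]|.

Definition cr_count (F : finFieldType) (r n : nat) : nat :=
  #|[set D : 'M[F]_n | is_differential D && (homology_dim D == r)]|.

From Stdlib Require Import Reals.
Open Scope R_scope.

Definition p_rn (F : finFieldType) (r n : nat) : R :=
  INR (cr_count F r n) / INR (c_count F n).

Fixpoint qprod (q : R) (r : nat) : R :=
  match r with
  | O => 1
  | S r' => qprod q r' * (q ^ (S r') - 1)
  end.

(* Main.v *)
Require Import Defs.
From HB Require Import structures.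
From mathcomp Require Import all_boot all_order all_algebra all_field.
From mathcomp Require Import zify.
From Stdlib Require Import Lia.
Import GRing.Theory.

Section Comb.
Local Set Implicit Arguments. Local Unset Strict Implicit.
Local Open Scope ring_scope.
Variable F : finFieldType.

Lemma card_space n p (K : 'M[F]_(p, n)) :
  #|[set v : 'rV[F]_n | (v <= K)%MS]| = (#|F| ^ \rank K)%N.
Proof.
have -> : [set v : 'rV[F]_n | (v <= K)%MS] =
   [set u *m row_base K | u in [set: 'rV[F]_(\rank K)]].
  have /eqmxP/andP [s1 s2] := eq_row_base K.
  apply/setP => v; rewrite inE; apply/idP/imsetP.
    move=> /submx_trans /(_ s2) /submxP [u ->]; by exists u; rewrite ?inE.
  by move=> [u _ ->]; apply: submx_trans s1; rewrite submxMl.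
rewrite card_imset; last exact: row_free_inj (row_base_free K).
by rewrite cardsT card_mx mul1n.
Qed.

Lemma card_free_sub n p (K : 'M[F]_(p, n)) m :
  #|[pred A : 'M[F]_(m, n) | (\rank A == m) && (A <= K)%MS]| =
  (\prod_(i < m) (#|F| ^ \rank K - #|F| ^ i))%N.
Proof.
elim: m => [|m IHm].
  rewrite big_ord0 (@eq_card1 _ (0 : 'M_(0, n))) // => A.
  by rewrite flatmx0 !inE mxrank0 sub0mx !eqxx.
rewrite big_ord_recr /= -IHm -sum_nat_const -sum1_card -add1n.
rewrite (partition_big dsubmx [pred A : 'M[F]_(m, n) | (\rank A == m) && (A <= K)%MS]) /= => [|A]; last first.
  rewrite !inE -{1 2}(vsubmxK A); move: {A}(_ A) (_ A) => Ad Au /andP [Afull].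
  rewrite col_mx_sub => /andP [_ ->]; rewrite andbT.
  rewrite eqn_leq rank_leq_row -(leq_add2l (\rank Au)) -mxrank_sum_cap.
  rewrite {1 3}[@mxrank]lock addsmxE (eqnP Afull) -lock -addnA.
  by rewrite leq_add ?rank_leq_row ?leq_addr.
apply: eq_bigr => A /andP [rAm AK]; rewrite (reindex (col_mx^~ A)) /=; last first.
  exists usubmx => [v _ | vA]; first by rewrite col_mxKu.
  by case/andP=> _ /eqP <-; rewrite vsubmxK.
transitivity #|[set v : 'rV[F]_n | (v <= K)%MS] :\: [set v : 'rV[F]_n | (v <= A)%MS]|.
  rewrite -sum1_card; apply: eq_bigl => v; rewrite !inE col_mxKd eqxx andbT.
  rewrite col_mx_sub AK andbT; congr (_ && _).
  rewrite eqn_leq rank_leq_row /= -(leq_add2r (\rank (v :&: A)%MS)).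
  rewrite -addsmxE mxrank_sum_cap (eqnP rAm) addnAC leq_add2r.
  by rewrite (ltn_leqif (mxrank_leqif_sup _)) ?capmxSl // sub_capmx submx_refl.
rewrite cardsD card_space; congr (_ - _)%N.
rewrite (setIidPr _); first by rewrite card_space (eqnP rAm).
by apply/subsetP => v; rewrite !inE => /submx_trans; apply.
Qed.

Definition Rn k d := (\prod_(i < k) (#|F| ^ d - #|F| ^ i))%N.

Lemma card_free k n : #|[pred B : 'M[F]_(k, n) | row_free B]| = Rn k n.
Proof.
rewrite /Rn; have := card_free_sub (1%:M : 'M[F]_n) k; rewrite mxrank1 => <-.
by apply: eq_card => B; rewrite !inE submx1 andbT.
Qed.

Lemma count_A k n (B : 'M[F]_(k, n)) : row_free B ->
  #|[pred A : 'M[F]_(n, k) | row_full A && (B *m A == 0)]| = Rn k (n - k).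
Proof.
move=> fB.
transitivity #|[pred X : 'M[F]_(k, n) | (\rank X == k) && (X <= kermx B^T)%MS]|.
  rewrite -!sum1_card (reindex (@trmx _ k n)) /=; last first.
    by exists (@trmx _ n k) => X _; rewrite trmxK.
  apply: eq_bigl => X; rewrite !inE /row_full mxrank_tr sub_kermx.
  by rewrite -(inj_eq (@trmx_inj _ _ _)) trmx_mul trmxK trmx0.
by rewrite card_free_sub mxrank_ker mxrank_tr (eqP fB).
Qed.

Lemma fact_rank n (D : 'M[F]_n) k : \rank D = k ->
  exists A : 'M[F]_(n, k), exists B : 'M[F]_(k, n),
    [/\ A *m B = D, row_full A & row_free B].
Proof.
move=> <-; exists (col_base D), (row_base D).
by split; [exact: mulmx_base | exact: col_base_full | exact: row_base_free].
Qed.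

Lemma count_main n k :
  (#|[set D : 'M[F]_n | (D *m D == 0%R) && (\rank D == k)]| * Rn k k
   = Rn k n * Rn k (n - k))%N.
Proof.
pose T := [set p : 'M[F]_(n, k) * 'M[F]_(k, n) |
             [&& row_full p.1, row_free p.2 & p.2 *m p.1 == 0]].
have T1 : #|T| = (Rn k n * Rn k (n - k))%N.
  rewrite -sum1_card (partition_big snd [pred B : 'M[F]_(k, n) | row_free B]) /=;
    last by move=> [A B]; rewrite inE => /and3P [].
  rewrite -card_free -sum_nat_const; apply: eq_bigr => B fB.
  rewrite -(count_A fB) -sum1_card (reindex (fun A => (A, B))) /=; last first.
    exists fst => [A _ | [A B'] /andP [_ /eqP /= ->]] //.
  by apply: eq_bigl => A; rewrite !inE /= fB eqxx andbT.
rewrite -T1 -[#|T|]sum1_card.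
rewrite (partition_big (fun p : 'M[F]_(n, k) * 'M[F]_(k, n) => p.1 *m p.2)
   [pred D : 'M[F]_n | (D *m D == 0) && (\rank D == k)]) /=; last first.
  move=> [A B]; rewrite inE /= => /and3P [fA fB BA].
  have [L LA] := row_fullP fA; have [C BC] := row_freeP fB.
  rewrite -mulmxA (mulmxA B) (eqP BA) mul0mx mulmx0 eqxx /=.
  rewrite eqn_leq (leq_trans (mxrankM_maxl _ _)) ?rank_leq_col //=.
  rewrite -{1}(mxrank1 F k) -BC -{1}(mul1mx B) -LA.
  by rewrite (leq_trans (mxrankM_maxl _ _)) // -mulmxA mxrankM_maxr.
rewrite -sum_nat_const; apply: eq_big => D; first by rewrite inE.
rewrite inE => /andP [DD /eqP rD].
have [A0 [B0 [AB0 fA0 fB0]]] := fact_rank rD.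
have [L0 LA0] := row_fullP fA0; have [C0 BC0] := row_freeP fB0.
have B0A0 : B0 *m A0 = 0.
  apply: (row_full_inj fA0); apply: (row_free_inj fB0).
  by rewrite mulmx0 mul0mx !mulmxA -mulmxA AB0 (eqP DD).
rewrite -(card_free k k) -sum1_card.
rewrite (reindex (fun g : 'M[F]_k => (A0 *m g, invmx g *m B0))) /=; last first.
  exists (fun p => L0 *m p.1) => [g _ | [A B]]; first by rewrite /= mulmxA LA0 mul1mx.
  rewrite !inE /= => /andP [/and3P [fA fB BA] /eqP ABD].
  have [L LA] := row_fullP fA; have [C BC] := row_freeP fB.
  have e1 : A = A0 *m B0 *m C by rewrite AB0 -ABD -mulmxA BC mulmx1.
  have eA : A0 *m (L0 *m A) = A.
    by rewrite [X in L0 *m X]e1 -!mulmxA (mulmxA L0) LA0 mul1mx mulmxA -e1.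
  have ug : (L *m A0) *m (L0 *m A) = 1%:M by rewrite -mulmxA eA LA.
  have [_ u2] := mulmx1_unit ug.
  have eiv : invmx (L0 *m A) = L *m A0.
    by rewrite -[LHS]mul1mx -ug -[_ *m invmx _]mulmxA mulmxV // mulmx1.
  congr (_, _); first exact: eA.
  by rewrite eiv -mulmxA AB0 -ABD mulmxA LA mul1mx.
apply: eq_bigl => g; rewrite !inE /=.
apply/idP/idP => [fg|]; last first.
  move=> /andP [/and3P [fA _ _] _].
  by rewrite /row_free eqn_leq rank_leq_row -{1}(eqP fA) mxrankM_maxr.
have ug : g \in unitmx by rewrite -row_free_unit.
rewrite /row_full mxrankMfree //.
have -> : \rank A0 == k := fA0.
rewrite /row_free -(mxrank_tr (invmx g *m B0)) trmx_mul mxrankMfree; last first.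
  rewrite /row_free mxrank_tr; apply: (_ : row_free (invmx g)).
  by rewrite row_free_unit unitmx_inv.
rewrite mxrank_tr.
have -> : \rank B0 == k := fB0.
rewrite /= -!mulmxA (mulmxA B0) B0A0 mul0mx mulmx0 eqxx /=.
by rewrite mulKVmx // AB0.
Qed.
Definition Nc n k := #|[set D : 'M[F]_n | (D *m D == 0) && (\rank D == k)]|.

Lemma count_Nc n k : (Nc n k * Rn k k = Rn k n * Rn k (n - k))%N.
Proof. exact: count_main. Qed.

Lemma rank_half n (D : 'M[F]_n) : (D *m D == 0) -> (2 * \rank D <= n)%N.
Proof.
move=> DD. have : (D <= kermx D)%MS by rewrite sub_kermx.
move/mxrankS; rewrite mxrank_ker => H.
have := rank_leq_row D. lia.
Qed.

Lemma Nc_zero n k : (n < 2 * k)%coq_nat -> Nc n k = 0%N.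
Proof.
move=> H; rewrite /Nc; apply/eqP; rewrite cards_eq0; apply/eqP/setP => D.
rewrite !inE; apply/negP => /andP [DD /eqP rD].
have := rank_half DD; rewrite rD; lia.
Qed.

Lemma cr_link r k : cr_count F r (r + 2 * k) = Nc (r + 2 * k) k.
Proof.
rewrite /cr_count /Nc; apply: eq_card => D; rewrite !inE /is_differential.
case DD: (D *m D == 0) => //=.
have := rank_half DD; rewrite /homology_dim mxrank_ker.
move=> H; apply/eqP/eqP; lia.
Qed.

Lemma c_link n : c_count F n = (\sum_(j < n.+1) Nc n j)%N.
Proof.
rewrite /c_count /Nc -sum1_card.
rewrite (partition_big (fun D : 'M[F]_n => (inord (\rank D) : 'I_n.+1)) xpredT) //=.
apply: eq_bigr => j _; rewrite -sum1_card; apply: eq_bigl => D; rewrite !inE /is_differential.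
case: (D *m D == 0) => //=.
by rewrite -val_eqE /= inordK // ltnS rank_leq_row.
Qed.
End Comb.

From Stdlib Require Import Reals.
From mathcomp Require Import zify.
From Stdlib Require Import Lia Lra.


Open Scope R_scope.


Lemma powD (x : R) (a b : nat) : x ^ (a + b)%nat = x ^ a * x ^ b.
Proof. rewrite -plusE; apply pow_add. Qed.

Lemma Un_cv_ext (u v : nat -> R) l : (forall n, u n = v n) -> Un_cv u l -> Un_cv v l.
Proof. intros H Hu e He; destruct (Hu e He) as [N HN]; exists N; intros n Hn; rewrite <- H; auto. Qed.

Lemma Un_cv_shift (u : nat -> R) l m : Un_cv u l -> Un_cv (fun k => u (k + m)%nat) l.
Proof. intros Hu e He; destruct (Hu e He) as [N HN]; exists N; intros n Hn; apply HN; lia. Qed.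

Lemma Un_cv_shiftB (u : nat -> R) l m : Un_cv u l -> Un_cv (fun k => u (k - m)%nat) l.
Proof. intros Hu e He; destruct (Hu e He) as [N HN]; exists (N + m)%nat; intros n Hn; apply HN; lia. Qed.

Lemma Un_cv_const l : Un_cv (fun _ => l) l.
Proof. intros e He; exists 0%nat; intros n _; unfold R_dist; rewrite Rminus_eq_0 Rabs_R0; lra. Qed.

Lemma Un_cv_inv (u : nat -> R) l : l <> 0 -> Un_cv u l -> Un_cv (fun n => / u n) (/ l).
Proof.
intros Hl Hu.
apply (continuity_seq (fun x => / x) u l); auto.
apply (continuity_pt_inv (fun x => x)); auto.
apply derivable_continuous_pt, derivable_pt_id.
Qed.

Lemma fin_sum_cv (a : nat -> nat -> R) (Lf : nat -> R) M :
  (forall m, Un_cv (fun k => a m k) (Lf m)) ->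
  Un_cv (fun N => sum_f_R0 (fun m => a m (N - m)%nat) M) (sum_f_R0 Lf M).
Proof.
intros H; induction M; simpl.
- apply (Un_cv_ext (fun N => a 0%nat (N - 0)%nat)); [auto|]. apply Un_cv_shiftB, H.
- apply CV_plus; auto. apply Un_cv_shiftB, H.
Qed.

Lemma tannery (a : nat -> nat -> R) (Lf : nat -> R) T :
  (forall m k, 0 <= a m k <= Lf m) ->
  (forall m, Un_cv (fun k => a m k) (Lf m)) ->
  Un_cv (sum_f_R0 Lf) T ->
  Un_cv (fun N => sum_f_R0 (fun m => a m (N - m)%nat) N) T.
Proof.
intros Hb Hc HT eps He.
assert (HL : forall m, 0 <= Lf m) by (intros m; destruct (Hb m 0%nat); lra).
assert (Hg : Un_growing (sum_f_R0 Lf)).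
{ intros n; simpl. assert (0 <= Lf (S n)) by auto. lra. }
assert (HP := growing_ineq _ _ Hg HT).
destruct (HT (eps / 3)) as [M HM]; [lra|].
assert (HM' := HM M (le_n M)). unfold R_dist in HM'.
destruct (fin_sum_cv a Lf M Hc (eps / 3)) as [N1 HN1]; [lra|].
exists (N1 + S M)%nat; intros N HN.
assert (HA := HN1 N ltac:(lia)). unfold R_dist in HA |- *.
rewrite (tech2 _ M N ltac:(lia)).
assert (H3 := HP N).
rewrite (tech2 Lf M N ltac:(lia)) in H3.
set tl := sum_f_R0 (fun i => a (S M + i)%coq_nat (N - (S M + i))%nat) (N - S M)%coq_nat.
set tL := sum_f_R0 (fun i => Lf (S M + i)%coq_nat) (N - S M)%coq_nat.
assert (H1 : 0 <= tl) by (apply cond_pos_sum; intros i; apply Hb).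
assert (H2 : tl <= tL) by (apply sum_Rle; intros i _; apply Hb).
fold tL in H3; revert HA HM' H3.
set A := sum_f_R0 (fun m => a m (N - m)%nat) M.
set P := sum_f_R0 Lf M.
intros HA HM' H3.
assert (P <= T) by apply HP.
split_Rabs; lra.
Qed.

Lemma inv_pow_cv (x : R) : 1 < x -> Un_cv (fun k => / x ^ k) 0.
Proof.
intros Hx e He.
destruct (pow_lt_1_zero (/ x)) with (y := e) as [N HN]; auto.
{ rewrite Rabs_pos_eq; [|left; apply Rinv_0_lt_compat; lra].
  rewrite <- Rinv_1. apply Rinv_lt_contravar; lra. }
exists N; intros n Hn; unfold R_dist. rewrite Rminus_0_r -pow_inv. apply HN; lia.
Qed.

Lemma sum_trunc (f : nat -> R) K n : (K <= n)%coq_nat ->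
  (forall j, (K < j)%coq_nat -> (j <= n)%coq_nat -> f j = 0) ->
  sum_f_R0 f n = sum_f_R0 f K.
Proof.
induction n; intros H1 H2.
- replace K with 0%nat by lia; reflexivity.
- destruct (Nat.eq_dec K (S n)) as [->|Hne]; [reflexivity|].
  simpl. rewrite IHn; [|lia|intros; apply H2; lia]. rewrite (H2 (S n)); [ring|lia|lia].
Qed.

Lemma sum_rev (f : nat -> R) K : sum_f_R0 f K = sum_f_R0 (fun j => f (K - j)%nat) K.
Proof.
revert f; induction K; intros f; [reflexivity|].
rewrite (decomp_sum (fun j => f (S K - j)%nat)); [|lia].
simpl pred. rewrite (sum_eq (fun i => f (S K - S i)%nat) (fun j => f (K - j)%nat)).
2:{ intros i _; f_equal; lia. }
rewrite <- IHK. simpl. replace (S K - 0)%nat with (S K) by lia. ring.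
Qed.

Lemma sum_ge_first (f : nat -> R) K : (forall i, 0 <= f i) -> f 0%nat <= sum_f_R0 f K.
Proof.
intros H; induction K; simpl; [lra|]. specialize (H (S K)). lra.
Qed.

Section Analysis.
Variable q : R.
Hypothesis Hq : 2 <= q.

Fixpoint Rp (k d : nat) : R :=
  match k with O => 1 | S k' => Rp k' d * (q ^ d - q ^ k') end.

Lemma q_pos : 0 < q. Proof. lra. Qed.
Lemma qpow_pos n : 0 < q ^ n. Proof. apply pow_lt; lra. Qed.
Lemma qpow_gt1 n : (0 < n)%coq_nat -> 1 < q ^ n.
Proof. intros H. replace 1 with (q ^ 0) by reflexivity. apply Rlt_pow; lra || lia. Qed.

Lemma Rp_pos k d : (k <= d)%coq_nat -> 0 < Rp k d.
Proof.
induction k; simpl; intros H; [lra|].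
apply Rmult_lt_0_compat; [apply IHk; lia|].
assert (q ^ k < q ^ d) by (apply Rlt_pow; lra || lia). lra.
Qed.

Lemma Rp_SS k d : Rp (S k) (S d) = (q ^ S d - 1) * q ^ k * Rp k d.
Proof.
induction k.
- simpl; ring.
- change (Rp (S (S k)) (S d)) with (Rp (S k) (S d) * (q ^ S d - q ^ S k)).
  rewrite IHk; simpl; ring.
Qed.

Lemma qprod_pos r : 0 < qprod q r.
Proof.
induction r; simpl; [lra|].
apply Rmult_lt_0_compat; auto.
assert (1 < q * q ^ r).
{ replace (q * q ^ r) with (q ^ S r) by reflexivity. apply qpow_gt1; lia. }
lra.
Qed.

Variable Nr : nat -> nat -> R.
Hypothesis HN : forall n k, (2 * k <= n)%coq_nat ->
  Nr n k * Rp k k = Rp k n * Rp k (n - k)%nat.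
Hypothesis HN0 : forall n k, (n < 2 * k)%coq_nat -> Nr n k = 0.

Lemma Nr_pos n k : (2 * k <= n)%coq_nat -> 0 < Nr n k.
Proof.
intros H.
assert (Hk : 0 < Rp k k) by (apply Rp_pos; lia).
assert (0 < Rp k n * Rp k (n - k)%nat)
  by (apply Rmult_lt_0_compat; apply Rp_pos; lia).
rewrite <- (HN n k H) in H0.
destruct (Rlt_le_dec 0 (Nr n k)) as [|Hle]; auto.
assert (Nr n k * Rp k k <= 0) by nra. lra.
Qed.

Lemma Nr_cons h k :
  Nr (h + 2 * k + 2)%nat (S k) * (q ^ S k - 1) =
  q ^ k * (q ^ (h + 1)%nat - 1) * (q ^ (h + 2)%nat - 1) * Nr (h + 2 * k + 2)%nat k.
Proof.
set n := (h + 2 * k + 2)%nat.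
set a := q ^ k. set b := q ^ (h + 1)%nat. set c := q ^ (h + 2)%nat.
set X := Rp k (h + k + 1)%nat. set Y := Rp k (h + k + 2)%nat. set Z := Rp k n.
assert (E1 : Nr n k * Rp k k = Z * Y).
{ rewrite (HN n k); [|unfold n; lia]. unfold Z, Y. do 2 f_equal. unfold n; lia. }
assert (E2 : Nr n (S k) * Rp (S k) (S k) = Rp (S k) n * Rp (S k) (h + k + 1)%nat).
{ rewrite (HN n (S k)); [|unfold n; lia]. do 2 f_equal. unfold n; lia. }
assert (P1 : q ^ n = a * (a * c)).
{ unfold n, a, c. replace (h + 2 * k + 2)%nat with (k + (k + (h + 2)))%nat by lia.
  rewrite !powD; ring. }
assert (P2 : q ^ (h + k + 1)%nat = a * b).
{ unfold a, b. replace (h + k + 1)%nat with (k + (h + 1))%nat by lia. rewrite powD; ring. }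
assert (P3 : q ^ (h + k + 2)%nat = a * c).
{ unfold a, c. replace (h + k + 2)%nat with (k + (h + 2))%nat by lia. rewrite powD; ring. }
assert (E3 : Y * (a * c - a) = (a * c - 1) * a * X).
{ assert (H1 := Rp_SS k (h + k + 1)%nat).
  replace (S (h + k + 1)) with (h + k + 2)%nat in H1 by lia.
  change (Rp (S k) (h + k + 2)%nat) with (Rp k (h + k + 2)%nat * (q ^ (h + k + 2)%nat - q ^ k)) in H1.
  fold Y in H1. fold X in H1. fold a in H1. rewrite P3 in H1. exact H1. }
assert (Ha : 0 < a) by apply qpow_pos.
assert (E3' : (c - 1) * Y = (a * c - 1) * X).
{ apply (Rmult_eq_reg_l a); [|lra]. transitivity (Y * (a * c - a)); [ring|]. rewrite E3. ring. }
assert (HR : 0 < Rp k k) by (apply Rp_pos; lia).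
apply (Rmult_eq_reg_r (a * Rp k k)); [|apply Rgt_not_eq, Rmult_lt_0_compat; auto].
transitivity (Nr n (S k) * Rp (S k) (S k)).
{ rewrite Rp_SS. fold a. simpl. ring. }
rewrite E2.
change (Rp (S k) n) with (Z * (q ^ n - q ^ k)).
change (Rp (S k) (h + k + 1)%nat) with (X * (q ^ (h + k + 1)%nat - q ^ k)).
fold a. rewrite P1 P2.
transitivity (a * (b - 1) * a * Z * ((a * c - 1) * X)); [ring|].
rewrite <- E3'.
transitivity (a * (b - 1) * (c - 1) * a * (Nr n k * Rp k k)); [|ring].
rewrite E1. ring.
Qed.

Definition L (e m : nat) : R := (q - 1) ^ e * q ^ m / qprod q (2 * m + e)%nat.
Fixpoint Pr (k m : nat) : R :=
  match m with O => 1 | S m' => (1 - / q ^ S k) * Pr (S k) m' end.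

Lemma L_0 e : (e <= 1)%coq_nat -> L e 0 = 1.
Proof.
intros He; destruct e as [|[|e]]; try lia; unfold L; simpl.
- field.
- field. lra.
Qed.

Lemma L_pos e m : 0 < L e m.
Proof.
unfold L. apply Rdiv_lt_0_compat; [|apply qprod_pos].
apply Rmult_lt_0_compat; [apply pow_lt; lra|apply qpow_pos].
Qed.

Lemma L_S e m : L e (S m) =
  L e m * q / ((q ^ (2 * m + e + 1)%nat - 1) * (q ^ (2 * m + e + 2)%nat - 1)).
Proof.
unfold L.
replace (2 * S m + e)%nat with (S (S (2 * m + e))) by lia.
replace (2 * m + e + 1)%nat with (S (2 * m + e)) by lia.
replace (2 * m + e + 2)%nat with (S (S (2 * m + e))) by lia.
change (qprod q (S (S (2 * m + e)))) with
  (qprod q (2 * m + e)%nat * (q ^ S (2 * m + e) - 1) * (q ^ S (S (2 * m + e)) - 1)).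
assert (H1 : 1 < q ^ S (2 * m + e)) by (apply qpow_gt1; lia).
assert (H2 : 1 < q ^ S (S (2 * m + e))) by (apply qpow_gt1; lia).
assert (H3 := qprod_pos (2 * m + e)%nat).
change (q ^ S m) with (q * q ^ m).
field. repeat split; lra.
Qed.

Lemma Pr_bounds k m : 0 < Pr k m <= 1.
Proof.
revert k; induction m; intros k; simpl; [lra|].
destruct (IHm (S k)).
assert (1 < q * q ^ k) by (change (q * q ^ k) with (q ^ S k); apply qpow_gt1; lia).
assert (0 < / (q * q ^ k) < 1).
{ split; [apply Rinv_0_lt_compat; lra|]. rewrite <- Rinv_1. apply Rinv_lt_contravar; lra. }
split; [apply Rmult_lt_0_compat; lra|].
assert (0 < 1 - / (q * q ^ k)) by lra.
nra.
Qed.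

Lemma ratio e : (e <= 1)%coq_nat -> forall m k,
  Nr (2 * k + 2 * m + e)%nat k / Nr (2 * k + 2 * m + e)%nat (k + m)%nat = L e m * Pr k m.
Proof.
intros He m; induction m; intros k.
- rewrite L_0; auto. simpl Pr. replace (k + 0)%nat with k by lia.
  assert (0 < Nr (2 * k + 2 * 0 + e)%nat k) by (apply Nr_pos; lia).
  field; lra.
- assert (IH := IHm (S k)).
  replace (2 * S k + 2 * m + e)%nat with (2 * k + 2 * S m + e)%nat in IH by lia.
  replace (S k + m)%nat with (k + S m)%nat in IH by lia.
  set n := (2 * k + 2 * S m + e)%nat in IH |- *.
  assert (C := Nr_cons (2 * m + e)%nat k).
  replace (2 * m + e + 2 * k + 2)%nat with n in C by (unfold n; lia).
  assert (HA : 0 < Nr n k) by (apply Nr_pos; unfold n; lia).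
  assert (HB : 0 < Nr n (S k)) by (apply Nr_pos; unfold n; lia).
  assert (HC : 0 < Nr n (k + S m)%nat) by (apply Nr_pos; unfold n; lia).
  assert (H1 : 1 < q ^ (2 * m + e + 1)%nat) by (apply qpow_gt1; lia).
  assert (H2 : 1 < q ^ (2 * m + e + 2)%nat) by (apply qpow_gt1; lia).
  assert (Hk := qpow_pos k).
  assert (EA : Nr n k = Nr n (S k) * (q ^ S k - 1) /
     (q ^ k * (q ^ (2 * m + e + 1)%nat - 1) * (q ^ (2 * m + e + 2)%nat - 1))).
  { rewrite C. field. repeat split; lra. }
  rewrite EA L_S.
  transitivity (Nr n (S k) / Nr n (k + S m)%nat * ((q ^ S k - 1) /
     (q ^ k * (q ^ (2 * m + e + 1)%nat - 1) * (q ^ (2 * m + e + 2)%nat - 1)))).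
  { field. repeat split; lra. }
  rewrite IH. simpl Pr. change (q ^ S k) with (q * q ^ k).
  field. repeat split; lra.
Qed.

Lemma Pr_lim m : Un_cv (fun k => Pr k m) 1.
Proof.
induction m.
- apply (Un_cv_ext (fun _ => 1)); [reflexivity|apply Un_cv_const].
- replace 1 with ((1 - 0) * 1) by ring.
  apply (Un_cv_ext (fun k => (1 - / q ^ S k) * Pr (S k) m)); [reflexivity|].
  apply CV_mult.
  + apply CV_minus; [apply Un_cv_const|].
    apply (Un_cv_ext (fun k => / q ^ (k + 1)%nat)).
    { intros k; replace (k + 1)%nat with (S k) by lia; reflexivity. }
    apply (Un_cv_shift (fun k => / q ^ k) 0 1), inv_pow_cv; lra.
  + apply (Un_cv_ext (fun k => Pr (k + 1)%nat m)).
    { intros k; replace (k + 1)%nat with (S k) by lia; reflexivity. }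
    apply (Un_cv_shift (fun k => Pr k m) 1 1); auto.
Qed.

Lemma L_geom e : (e <= 1)%coq_nat -> forall m, L e m <= (2 / 3) ^ m.
Proof.
intros He m; induction m.
- rewrite L_0; [simpl; lra|auto].
- rewrite L_S. simpl pow.
  assert (H1 : q ^ 1 <= q ^ (2 * m + e + 1)%nat) by (apply Rle_pow; lra || lia).
  assert (H2 : q ^ 2 <= q ^ (2 * m + e + 2)%nat) by (apply Rle_pow; lra || lia).
  simpl in H1, H2.
  assert (HL := L_pos e m).
  set u := q ^ (2 * m + e + 1)%nat in H1 |- *. set v := q ^ (2 * m + e + 2)%nat in H2 |- *.
  assert (Hqq : q * (q * 1) >= 4) by nra.
  assert (Hu : u - 1 > 0) by lra. assert (Hv : v - 1 > 0) by lra.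
  assert (Hp : 0 < (u - 1) * (v - 1)) by (apply Rmult_lt_0_compat; lra).
  assert (Hf : q / ((u - 1) * (v - 1)) <= 2 / 3).
  { apply (Rmult_le_reg_r ((u - 1) * (v - 1))); auto.
    unfold Rdiv; rewrite Rmult_assoc Rinv_l; [|lra].
    assert ((q - 1) * (q * (q * 1) - 1) <= (u - 1) * (v - 1)) by nra.
    nra. }
  assert (Hf0 : 0 <= q / ((u - 1) * (v - 1))).
  { apply Rlt_le, Rdiv_lt_0_compat; lra. }
  replace (L e m * q / ((u - 1) * (v - 1))) with (L e m * (q / ((u - 1) * (v - 1))))
    by (field; lra).
  rewrite (Rmult_comm (2 / 3)).
  apply Rmult_le_compat; lra.
Qed.

Lemma L_sum e : (e <= 1)%coq_nat -> {T | Un_cv (sum_f_R0 (L e)) T}.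
Proof.
intros He.
apply (Rseries_CV_comp (L e) (fun n => (2 / 3) ^ n)).
{ intros n; split; [left; apply L_pos|apply L_geom; auto]. }
exists (/ (1 - 2 / 3)).
assert (G := GP_infinite (2 / 3) ltac:(rewrite Rabs_pos_eq; lra)).
intros eps Heps; destruct (G eps Heps) as [N HN2]; exists N; intros n Hn.
rewrite <- (sum_eq (fun i => 1 * (2 / 3) ^ i)); [apply HN2; auto|].
intros; ring.
Qed.

Lemma T_pos e T : (e <= 1)%coq_nat -> Un_cv (sum_f_R0 (L e)) T -> forall m, sum_f_R0 (L e) m <= T.
Proof.
intros He HT. apply growing_ineq; auto.
intros n; simpl. assert (0 < L e (S n)) by apply L_pos. lra.
Qed.

Lemma main_e e T r m : (e <= 1)%coq_nat -> Un_cv (sum_f_R0 (L e)) T ->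
  r = (2 * m + e)%nat ->
  Un_cv (fun k => Nr (r + 2 * k)%nat k / sum_f_R0 (Nr (r + 2 * k)%nat) (r + 2 * k)%nat)
        (L e m / T).
Proof.
intros He HT Hr.
set s := fun K => sum_f_R0 (fun j => L e j * Pr (K - j)%nat j) K.
assert (Hs : Un_cv s T).
{ apply (tannery (fun j k => L e j * Pr k j) (L e)); auto.
  - intros j k; destruct (Pr_bounds k j); assert (0 < L e j) by apply L_pos.
    split; [nra|]. nra.
  - intros j. assert (H := CV_mult _ _ _ _ (Un_cv_const (L e j)) (Pr_lim j)).
    rewrite Rmult_1_r in H; exact H. }
assert (HT0 : 0 < T).
{ assert (H := T_pos e T He HT 0). simpl in H. rewrite L_0 in H; auto. lra. }
apply (Un_cv_ext (fun k => L e m * Pr k m * / s (k + m)%nat)).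
2:{ replace (L e m / T) with (L e m * 1 * / T) by (field; lra).
    apply CV_mult; [apply CV_mult; [apply Un_cv_const|apply Pr_lim]|].
    apply Un_cv_inv; [lra|]. apply (Un_cv_shift s T m); auto. }
intros k.
set n := (r + 2 * k)%nat. set K := (k + m)%nat.
assert (HnK : n = (2 * K + e)%nat) by (unfold n, K; lia).
rewrite (sum_trunc _ K n); [|unfold n, K; lia|].
2:{ intros j H1 H2; apply HN0; lia. }
rewrite sum_rev.
assert (HK : 0 < Nr n K) by (apply Nr_pos; lia).
rewrite (sum_eq _ (fun j => L e j * Pr (K - j)%nat j * Nr n K)).
2:{ intros j Hj.
    assert (R := ratio e He j (K - j)%nat).
    replace (2 * (K - j) + 2 * j + e)%nat with n in R by lia.
    replace (K - j + j)%nat with K in R by lia.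
    rewrite <- R. field. lra. }
rewrite <- scal_sum. fold (s K).
assert (R := ratio e He m k).
replace (2 * k + 2 * m + e)%nat with n in R by (unfold n; lia).
fold K in R.
assert (Hs0 : 0 < s K).
{ unfold s. apply Rlt_le_trans with (L e 0 * Pr (K - 0)%nat 0).
  - simpl. rewrite Rmult_1_r. apply L_pos.
  - apply (sum_ge_first (fun j => L e j * Pr (K - j)%nat j)).
    intros i. destruct (Pr_bounds (K - i)%nat i). assert (0 < L e i) by apply L_pos. nra. }
rewrite <- R. field. split; lra.
Qed.

Lemma parity_unique r m e : r = (2 * m + e)%nat -> (e <= 1)%coq_nat ->
  Nat.div2 r = m /\ Nat.b2n (Nat.odd r) = e.
Proof.
intros H1 H2. assert (H3 := Nat.div2_odd r). assert (H4 := Nat.b2n_le_1 (Nat.odd r)).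
split; lia.
Qed.

Lemma L_shift_cv e T : Un_cv (sum_f_R0 (L e)) T ->
  Un_cv (sum_f_R0 (fun k => L e (k + 1)%nat)) (T - L e 0).
Proof.
intros HT eps He; destruct (HT eps He) as [N HN']; exists N; intros n Hn.
unfold R_dist. replace (sum_f_R0 (fun k => L e (k + 1)%nat) n - (T - L e 0))
  with (sum_f_R0 (L e) (S n) - T).
{ apply HN'; lia. }
rewrite (decomp_sum (L e) (S n)); [|lia]. simpl pred.
rewrite (sum_eq (fun i => L e (S i)) (fun k => L e (k + 1)%nat)); [|intros i _; f_equal; lia]. simpl. ring.
Qed.

Theorem abstract_main :
  exists pl : nat -> R,
    (forall r : nat,
        Un_cv (fun k : nat => Nr (r + 2 * k)%nat k / sum_f_R0 (Nr (r + 2 * k)%nat) (r + 2 * k)%nat) (pl r)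
        /\ 0 < pl r < 1)
    /\ (forall m : nat, (1 <= m)%nat ->
          pl (2 * m)%nat / pl 0%nat = q ^ m / qprod q (2 * m))
    /\ (exists S : R,
          infinite_sum (fun k : nat => q ^ (k + 1) / qprod q (2 * (k + 1))) S
          /\ pl 0%nat = 1 / (1 + S))
    /\ (forall m : nat, (1 <= m)%nat ->
          pl (2 * m + 1)%nat / pl 1%nat
          = (q - 1) * q ^ m / qprod q (2 * m + 1))
    /\ (exists S' : R,
          infinite_sum (fun k : nat => q ^ (k + 1) / qprod q (2 * (k + 1) + 1)) S'
          /\ pl 1%nat = 1 / (1 + (q - 1) * S')).
Proof.
destruct (L_sum 0 ltac:(lia)) as [T0 HT0].
destruct (L_sum 1 ltac:(lia)) as [T1 HT1].
set Tf := fun e : nat => match e with O => T0 | _ => T1 end.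
assert (HTf : forall e, (e <= 1)%coq_nat -> Un_cv (sum_f_R0 (L e)) (Tf e)).
{ intros [|[|e]] He; simpl; auto; lia. }
set pl := fun r => L (Nat.b2n (Nat.odd r)) (Nat.div2 r) / Tf (Nat.b2n (Nat.odd r)).
assert (Hpl : forall r m e, r = (2 * m + e)%nat -> (e <= 1)%coq_nat -> pl r = L e m / Tf e).
{ intros r m e H1 H2. unfold pl. destruct (parity_unique r m e H1 H2) as [-> ->]. reflexivity. }
assert (HL0 : forall e, (e <= 1)%coq_nat -> L e 0 = 1) by apply L_0.
assert (HT0p : forall e, (e <= 1)%coq_nat -> 1 < Tf e).
{ intros e He. assert (H := T_pos e (Tf e) He (HTf e He) 1). simpl in H.
  rewrite HL0 in H; auto. assert (0 < L e 1) by apply L_pos. lra. }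
exists pl; split; [|split; [|split; [|split]]].
- intros r. assert (Hd := Nat.div2_odd r). assert (Hb := Nat.b2n_le_1 (Nat.odd r)).
  pose m := Nat.div2 r. pose e := Nat.b2n (Nat.odd r).
  assert (Hr : r = (2 * m + e)%nat) by (unfold m, e; lia).
  assert (He : (e <= 1)%coq_nat) by (unfold e; lia). clear Hb.
  rewrite (Hpl r m e Hr He). split.
  + apply main_e; auto.
  + assert (HTe := HTf e He). assert (Hp := L_pos e m).
    assert (HT1' : L e m + L e (S m) <= Tf e).
    { apply Rle_trans with (sum_f_R0 (L e) (S m)); [|apply T_pos; auto].
      simpl. assert (L e m <= sum_f_R0 (L e) m); [|lra].
      destruct m; simpl; [lra|]. 
      assert (0 <= sum_f_R0 (L e) m) by (apply cond_pos_sum; intros; left; apply L_pos). lra. }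
    assert (0 < L e (S m)) by apply L_pos.
    split; [apply Rdiv_lt_0_compat; lra|].
    apply (Rmult_lt_reg_r (Tf e)); [lra|]. unfold Rdiv. rewrite Rmult_assoc Rinv_l; lra.
- intros m _. rewrite (Hpl _ m 0%nat); [|lia|lia]. rewrite (Hpl 0%nat 0%nat 0%nat); [|lia|lia].
  rewrite HL0; [|lia]. assert (HT00 : 1 < Tf 0%nat) by (apply HT0p; lia).
  unfold L. replace (2 * m + 0)%nat with (2 * m)%nat by lia.
  assert (H := qprod_pos (2 * m)%nat). simpl in HT00 |- *. field. split; lra.
- exists (T0 - 1). split.
  + assert (H := L_shift_cv 0%nat T0 HT0). rewrite HL0 in H; [|lia].
    intros eps He; destruct (H eps He) as [N HN']; exists N; intros n Hn.
    rewrite (sum_eq _ (fun k => L 0%nat (k + 1)%nat)); [apply HN'; auto|].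
    intros i _. unfold L. replace (2 * (i + 1) + 0)%nat with (2 * (i + 1))%nat by lia.
    simpl. field. apply Rgt_not_eq, qprod_pos.
  + rewrite (Hpl 0%nat 0%nat 0%nat); [|lia|lia]. rewrite HL0; [|lia]. simpl Tf. f_equal. ring.
- intros m _. rewrite (Hpl _ m 1%nat); [|lia|lia]. rewrite (Hpl 1%nat 0%nat 1%nat); [|lia|lia].
  rewrite HL0; [|lia]. assert (HT11 : 1 < Tf 1%nat) by (apply HT0p; lia).
  unfold L. assert (H := qprod_pos (2 * m + 1)%nat). simpl in HT11 |- *. field. split; lra.
- exists ((T1 - 1) / (q - 1)). split.
  + assert (H := L_shift_cv 1%nat T1 HT1). rewrite HL0 in H; [|lia].
    intros eps He.
    destruct (H (eps * (q - 1))) as [N HN']; [apply Rmult_lt_0_compat; lra|].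
    exists N; intros n Hn.
    specialize (HN' n Hn). unfold R_dist in HN' |- *.
    rewrite (sum_eq _ (fun k => L 1%nat (k + 1)%nat * / (q - 1))).
    2:{ intros i _. unfold L. simpl. field. split; [lra|apply Rgt_not_eq, qprod_pos]. }
    rewrite <- scal_sum.
    replace (/ (q - 1) * sum_f_R0 (fun k => L 1%nat (k + 1)%nat) n - (T1 - 1) / (q - 1))
      with ((sum_f_R0 (fun k => L 1%nat (k + 1)%nat) n - (T1 - 1)) / (q - 1)) by (field; lra).
    unfold Rdiv. rewrite Rabs_mult (Rabs_pos_eq (/ (q - 1))); [|left; apply Rinv_0_lt_compat; lra].
    apply (Rmult_lt_reg_r (q - 1)); [lra|]. rewrite Rmult_assoc Rinv_l; lra.
  + rewrite (Hpl 1%nat 0%nat 1%nat); [|lia|lia]. rewrite HL0; [|lia]. simpl Tf. f_equal. field. lra.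
Qed.

End Analysis.

Section Link.
Variable F : finFieldType.

Lemma INR_expn (a b : nat) : INR (expn a b) = INR a ^ b.
Proof. elim: b => [|b IH] //=. by rewrite expnS -multE mult_INR IH. Qed.

Lemma INR_Rn k d : (k <= d)%coq_nat -> INR (Rn F k d) = Rp (INR #|F|) k d.
Proof.
elim: k => [|k IH] Hk; first by rewrite /Rn big_ord0.
rewrite /Rn big_ord_recr /= -/(Rn F k d) -multE mult_INR IH; last by lia.
rewrite -minusE minus_INR; last first.
  apply/leP; rewrite leq_exp2l ?card_finNzRing_gt1 //; apply/leP; lia.
by rewrite !INR_expn.
Qed.

Lemma HN_link n k : (2 * k <= n)%coq_nat ->
  INR (Nc F n k) * Rp (INR #|F|) k k = Rp (INR #|F|) k n * Rp (INR #|F|) k (n - k)%nat.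
Proof.
move=> H.
rewrite -!INR_Rn; try lia.
by rewrite -!mult_INR !multE count_Nc.
Qed.

Lemma INR_sum n (f : nat -> nat) : INR (\sum_(j < n.+1) f j)%N = sum_f_R0 (fun j => INR (f j)) n.
Proof.
elim: n => [|n IH]; first by rewrite big_ord_recr big_ord0.
by rewrite big_ord_recr /= -plusE plus_INR IH.
Qed.

End Link.

Theorem theorem1 (F : finFieldType) :
  let q := INR #|F| in
  exists pl : nat -> R,
    (forall r : nat,
        Un_cv (fun k : nat => p_rn F r (r + 2 * k)%nat) (pl r)
        /\ 0 < pl r < 1)
    /\ (forall m : nat, (1 <= m)%nat ->
          pl (2 * m)%nat / pl 0%nat = q ^ m / qprod q (2 * m))
    /\ (exists S : R,
          infinite_sum (fun k : nat => q ^ (k + 1) / qprod q (2 * (k + 1))) S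
          /\ pl 0%nat = 1 / (1 + S))
    /\ (forall m : nat, (1 <= m)%nat ->
          pl (2 * m + 1)%nat / pl 1%nat
          = (q - 1) * q ^ m / qprod q (2 * m + 1))
    /\ (exists S' : R,
          infinite_sum (fun k : nat => q ^ (k + 1) / qprod q (2 * (k + 1) + 1)) S'
          /\ pl 1%nat = 1 / (1 + (q - 1) * S')).
Proof.
intros q.
have Hq : 2 <= q.
{ rewrite /q. change 2 with (INR 2). apply le_INR. apply/leP. exact: card_finNzRing_gt1. }
have [pl [H1 H2]] := abstract_main q Hq (fun n k => INR (Nc F n k))
   (HN_link F) (fun n k H => f_equal INR (Nc_zero F H)).
exists pl; split; [|exact H2].
intros r; destruct (H1 r) as [Hc Hb]; split; [|exact Hb].
apply (Un_cv_ext _ _ _ (fun k => erefl) ) in Hc.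
eapply Un_cv_ext; [|exact Hc].
intros k; rewrite /p_rn cr_link c_link INR_sum //.
Qed.
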